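(* Let $q$ be a power of $2$, $c\in\mathbb{F}_q^*$, $f(X)=X(X^{q-1}-c)^{q+1}$ on $\mathbb{F}_{q^2}$, with $a,\beta,g,L_{[u:v]},\mathbb{P}^1$ as in the context. For $L_{[u:v]}\in\mathbb{P}^1$, $g(u,v)=0$ if and only if $c=1$ and $v=0$. Moreover, for each $L_{[u:v]}\in\mathbb{P}^1$ with $g(u,v)\neq0$, the set $L_{[u:v]}\setminus\{0\}$ is the union of exactly $\frac{q-1}{d}$ cycles of length $d$ in $\mathcal{G}(f)$, where $d$ is the multiplicative order of $g(u,v)$ in $\mathbb{F}_q^*$.
   Context: $a\in\mathbb{F}_q$ with $\operatorname{Tr}(a)=1$ (absolute trace to $\mathbb{F}_2$), $\beta\in\mathbb{F}_{q^2}$ with $\beta^2+\beta+a=0$; every element of $\mathbb{F}_{q^2}$ is uniquely $x+y\beta$, $x,y\in\mathbb{F}_q$. For $(x,y)\neq(0,0)$, $g(x,y)=c^2+1+\frac{cy^2}{x^2+xy+y^2a}\in\mathbb{F}_q$, invariant under scaling $(x,y)$ by $\mathbb{F}_q^*$. For $(u,v)\in\mathbb{F}_q^2\setminus\{(0,0)\}$, $L_{[u:v]}=\{\lambda(u+v\beta):\lambda\in\mathbb{F}_q\}$ and $\mathbb{P}^1$ is the set of these $q+1$ lines. $\mathcal{G}(f)$ is the functional graph (vertices $\mathbb{F}_{q^2}$, edges $\langle x,f(x)\rangle$); a cycle of length $n$ consists of distinct $\alpha,f(\alpha),\dots,f^{(n-1)}(\alpha)$ with $f^{(n)}(\alpha)=\alpha$.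 *)

(* Defs.v *)
From HB Require Import structures.
From mathcomp Require Import all_boot all_order all_algebra.
Set Implicit Arguments. Unset Strict Implicit. Unset Printing Implicit Defensive.
Import GRing.Theory.
Local Open Scope ring_scope.

(* F_{q^2} is modelled as a finite field L with #|L| = q^2, q = 2^k;
   F_q is the subfield {x in L | x^q = x}. *)

Definition inFq (L : fieldType) (q : nat) (x : L) : Prop := x ^+ q = x.

Definition absTr (L : fieldType) (k : nat) (x : L) : L := \sum_(i < k) x ^+ (2 ^ i).

Definition fmap (L : fieldType) (q : nat) (c : L) (x : L) : L :=
  x * (x ^+ q.-1 - c) ^+ q.+1.

Definition gfun (L : fieldType) (c a x y : L) : L :=
  c ^+ 2 + 1 + c * y ^+ 2 / (x ^+ 2 + x * y + y ^+ 2 * a).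

Definition line (L : finFieldType) (q : nat) (beta u v : L) : {set L} :=
  [set z | [exists lam : L, (lam ^+ q == lam) && (z == lam * (u + v * beta))]].

Definition is_cycle_len (L : finFieldType) (f : L -> L) (n : nat) (S : {set L}) : Prop :=
  exists alpha : L,
    [/\ (0 < n)%N, iter n f alpha = alpha,
        uniq [seq iter i f alpha | i <- iota 0 n]
      & S = [set x | x \in [seq iter i f alpha | i <- iota 0 n]]].

Definition mult_order (L : fieldType) (x : L) (d : nat) : Prop :=
  [/\ (0 < d)%N, x ^+ d = 1 & forall n : nat, (0 < n)%N -> (n < d)%N -> x ^+ n != 1].

(* Main.v *)
Require Import Defs.
From mathcomp Require Import all_boot all_order all_algebra ring.
From mathcomp Require Import finfield.
Import GRing.Theory.
Local Open Scope ring_scope.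


Lemma powD (L : fieldType) (k : nat) : 2 \in [pchar L] ->
  forall x y : L, (x + y) ^+ (2 ^ k) = x ^+ (2 ^ k) + y ^+ (2 ^ k).
Proof.
move=> h2 x y; apply: exprDn_pchar.
by rewrite pnatX pnatE // h2.
Qed.

Lemma sum_sq (L : fieldType) (I : Type) (r : seq I) (F : I -> L) : 2 \in [pchar L] ->
  (\sum_(i <- r) F i) ^+ 2 = \sum_(i <- r) (F i) ^+ 2.
Proof.
move=> h2; elim: r => [|x r IH]; first by rewrite !big_nil expr0n.
by rewrite !big_cons -IH (@powD _ 1 h2) expn1.
Qed.

Lemma beta_pow (L : fieldType) (a beta : L) : 2 \in [pchar L] ->
  beta ^+ 2 + beta + a = 0 ->
  forall i, beta ^+ (2 ^ i) = beta + \sum_(j < i) a ^+ (2 ^ j).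
Proof.
move=> h2 hb; elim=> [|i IH]; first by rewrite big_ord0 addr0 expr1.
rewrite expnSr exprM IH (@powD _ 1 h2) expn1 sum_sq //.
have -> : beta ^+ 2 = beta + a.
  by rewrite -[RHS](oppr_pchar2 h2); apply/eqP; rewrite -addr_eq0 addrA hb.
rewrite big_ord_recl /= expn0 expr1 -addrA; congr (_ + _).
congr (_ + _); apply: eq_bigr => j _.
by rewrite /bump /= expnSr exprM.
Qed.


Lemma gform (L : fieldType) (q : nat) (c a beta u v : L) :
  2 \in [pchar L] -> (0 < q)%N ->
  (forall x y : L, (x + y) ^+ q = x ^+ q + y ^+ q) ->
  (forall x : L, (x ^+ q) ^+ q = x) ->
  c ^+ q = c ->
  beta ^+ 2 + beta + a = 0 ->
  u + v * beta != 0 ->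
  (u + v * beta) ^+ q = u + v * beta + v ->
  gfun c a u v = ((u + v * beta) ^+ q.-1 - c) ^+ q.+1.
Proof.
move=> h2 hq powDq hqq hc hb hz hzq.
set z := u + v * beta in hz hzq *.
set z' := z + v.
have hz' : z' != 0 by rewrite /z' -hzq expf_neq0.
have e1 : z ^+ 2 + z' ^+ 2 = v ^+ 2.
  have -> : z ^+ 2 + z' ^+ 2 = v ^+ 2 + 2%:R * (z ^+ 2 + z * v) by rewrite /z'; ring.
  by rewrite (pcharf0 h2) mul0r addr0.
have e2 : z * z' = u ^+ 2 + u * v + v ^+ 2 * a.
  have -> : z * z' = u ^+ 2 + u * v + v ^+ 2 * a + 2%:R * (u * v * beta - v ^+ 2 * a)
              + v ^+ 2 * (beta ^+ 2 + beta + a) by rewrite /z' /z; ring.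
  by rewrite hb (pcharf0 h2) !mul0r mulr0 !addr0.
have hw : z ^+ q.-1 = z' / z.
  apply: (mulfI hz); rewrite -exprS prednK // hzq /z' mulrC divfK //.
have hwq : (z ^+ q.-1) ^+ q = z / z'.
  by rewrite hw expr_div_n hzq -[X in X ^+ q]hzq hqq.
rewrite exprSr (oppr_pchar2 h2) powDq hwq hc hw.
transitivity (c ^+ 2 + 1 + c * (z ^+ 2 + z' ^+ 2) / (z * z')).
  by rewrite e1 e2.
field.
by rewrite hz hz'.
Qed.


Lemma gpow_inj (L : fieldType) (g : L) (d i j : nat) :
  g != 0 -> mult_order g d -> (i < d)%N -> (j < d)%N -> g ^+ i = g ^+ j -> i = j.
Proof.
move=> g0 [hd0 hgd hmin].
have key : forall i j, (i < j)%N -> (j < d)%N -> g ^+ i <> g ^+ j.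
  move=> i' j' hij hj e.
  have : g ^+ (j' - i') = 1.
    apply: (mulfI (expf_neq0 i' g0)).
    by rewrite -exprD (subnKC (ltnW hij)) mulr1 e.
  by apply/eqP; apply: hmin; rewrite ?subn_gt0 // (leq_ltn_trans (leq_subr _ _) hj).
move=> hi hj e; case: (ltngtP i j) => // h.
  by case: (key _ _ h hj e).
by case: (key _ _ h hi (esym e)).
Qed.

Lemma card_cycle (L : finFieldType) (f : L -> L) (d : nat) (S : {set L}) :
  is_cycle_len f d S -> #|S| = d.
Proof.
case=> alpha [_ _ hu ->].
by rewrite cardsE (card_uniqP hu) size_map size_iota.
Qed.

Theorem mainTheorem9 (L : finFieldType) (k : nat) (c a beta : L) :
  (0 < k)%N -> #|L| = ((2 ^ k) ^ 2)%N ->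
  inFq (2 ^ k) c -> c != 0 ->
  inFq (2 ^ k) a -> absTr k a = 1 ->
  beta ^+ 2 + beta + a = 0 ->
  (forall u v : L, inFq (2 ^ k) u -> inFq (2 ^ k) v -> (u, v) != (0, 0) ->
     (gfun c a u v = 0 <-> (c = 1 /\ v = 0)))
  /\
  (forall u v : L, inFq (2 ^ k) u -> inFq (2 ^ k) v -> (u, v) != (0, 0) ->
     gfun c a u v != 0 ->
     forall d : nat, mult_order (gfun c a u v) d ->
       exists C : {set {set L}},
         [/\ #|C| = ((2 ^ k - 1) %/ d)%N,
             (forall S, S \in C -> is_cycle_len (fmap (2 ^ k) c) d S)
           & \bigcup_(S in C) S = line (2 ^ k) beta u v :\ 0]).
Proof.
move=> hk hcard hc c0 ha htr hb.
rewrite /inFq in hc ha *.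
have h2 : 2 \in [pchar L].
  by apply: (@card_finPcharP _ _ (k * 2)); rewrite // hcard expnM.
have h20 : (2%:R : L) = 0 := pcharf0 h2.
set q := (2 ^ k)%N in hcard hc ha *.
have hq : (0 < q)%N by rewrite expn_gt0.
have powDq : forall x y : L, (x + y) ^+ q = x ^+ q + y ^+ q := @powD _ k h2.
have hqq : forall x : L, (x ^+ q) ^+ q = x.
  by move=> x; rewrite -exprM mulnn -hcard expf_card.
have hbq : beta ^+ q = beta + 1.
  by rewrite /q (@beta_pow _ a beta h2 hb k); congr (_ + _); exact: htr.
have zq : forall u v : L, u ^+ q = u -> v ^+ q = v ->
    (u + v * beta) ^+ q = u + v * beta + v.
  by move=> u v hu hv; rewrite powDq exprMn hu hv hbq mulrDr mulr1 addrA.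
have znz : forall u v : L, u ^+ q = u -> v ^+ q = v -> (u, v) != (0, 0) ->
    u + v * beta != 0.
  move=> u v hu hv huv; apply/eqP => hz0.
  have v0 : v = 0.
    by move: (zq u v hu hv); rewrite hz0 expr0n /= eqn0Ngt hq /= add0r.
  move: hz0; rewrite v0 mul0r addr0 => u0.
  by move: huv; rewrite u0 v0 eqxx.
split.
  move=> u v hu hv huv.
  have hz := znz u v hu hv huv.
  have hzq := zq u v hu hv.
  rewrite (@gform _ q c a beta u v h2 hq powDq hqq hc hb hz hzq).
  set z := u + v * beta in hz hzq *.
  have hw : z ^+ q.-1 * z = z ^+ q by rewrite -exprSr prednK.
  split.
    move/eqP; rewrite expf_eq0 /= subr_eq0 => /eqP wc.
    move: hw; rewrite wc => hw.
    have c2 : c ^+ 2 = 1.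
      apply: (mulIf hz); rewrite mul1r.
      have := hqq z; rewrite -hw exprMn hc -hw mulrA -expr2 => e.
      by rewrite -{2}e.
    have c1 : c = 1.
      have : (c + 1) ^+ 2 = 0 by rewrite (@powD _ 1 h2) expn1 c2 expr1n -mulr2n.
      by move/eqP; rewrite expf_eq0 /= addr_eq0 (oppr_pchar2 h2) => /eqP.
    split => //.
    move: hw; rewrite c1 mul1r hzq => e.
    by apply: (addrI z); rewrite addr0 -e.
  case=> c1 v0.
  have hz1 : z ^+ q.-1 = 1.
    apply: (mulIf hz); rewrite hw mul1r hzq v0 addr0 //.
  by rewrite hz1 c1 subrr expr0n.
move=> u v hu hv huv g0 d hord.
have hz := znz u v hu hv huv.
have hzq := zq u v hu hv.
have hg := @gform _ q c a beta u v h2 hq powDq hqq hc hb hz hzq.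
set z := u + v * beta in hz hzq hg *.
set g := gfun c a u v in g0 hord hg *.
case: (hord) => hd0 hgd hmin.
have gq : g ^+ q = g by rewrite hg exprAC exprSr hqq -exprS.
have fline : forall lam : L, lam ^+ q = lam -> lam != 0 ->
    fmap q c (lam * z) = (lam * g) * z.
  move=> lam hl l0.
  have hl1 : lam ^+ q.-1 = 1.
    by apply: (mulfI l0); rewrite -exprS prednK // hl mulr1.
  rewrite /fmap exprMn hl1 mul1r -hg; ring.
have iterf : forall (i : nat) (lam : L), lam ^+ q = lam -> lam != 0 ->
    iter i (fmap q c) (lam * z) = (lam * g ^+ i) * z.
  move=> i lam hl l0; elim: i => [|i IH]; first by rewrite expr0 mulr1.
  rewrite iterS IH fline.
  - by rewrite exprSr mulrA.
  - by rewrite exprMn hl exprAC gq.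
  - by rewrite mulf_neq0 // expf_neq0.
pose Fq := [set x : L | x ^+ q == x].
have cardFq : #|Fq| = q.
  pose phi := fun p : L * L => p.1 + p.2 * beta.
  have inj : {in setX Fq Fq &, injective phi}.
    case=> x y [x' y']; rewrite !inE /phi /= => /andP[/eqP hx /eqP hy] /andP[/eqP hx' /eqP hy'] E.
    have E' : x + y * (beta + 1) = x' + y' * (beta + 1).
      by move: (congr1 (fun t => t ^+ q) E); rewrite /= !powDq !exprMn hx hy hx' hy' hbq.
    have ey : y = y'.
      have aux : forall s t : L, s + t * (beta + 1) - (s + t * beta) = t by move=> s t; ring.
      by rewrite -(aux x y) -(aux x' y') E E'.
    by move: E; rewrite ey => /addIr ->.
  have surj : phi @: setX Fq Fq = [set: L].
    apply/setP => t; rewrite !inE; apply/imsetP.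
    pose y := t ^+ q + t; pose x := t + y * beta.
    have hy : y ^+ q = y by rewrite /y powDq hqq addrC.
    exists (x, y).
      rewrite !inE /= hy eqxx andbT; apply/eqP.
      rewrite /x powDq exprMn hy hbq /y.
      have -> : t ^+ q + (t ^+ q + t) * (beta + 1) =
          t + (t ^+ q + t) * beta + 2%:R * t ^+ q by ring.
      by rewrite h20 mul0r addr0.
    rewrite /phi /x /=.
    have -> : t + y * beta + y * beta = t + 2%:R * (y * beta) by ring.
    by rewrite h20 mul0r addr0.
  have := card_in_imset inj; rewrite surj cardsT hcard cardsX mulnn => /eqP.
  by rewrite eqn_exp2r // => /eqP.
have lineE : line q beta u v = (fun lam => lam * z) @: Fq.
  apply/setP => t; rewrite /line !inE; apply/existsP/imsetP.
    by case=> lam /andP[hl /eqP ->]; exists lam; rewrite ?inE.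
  by case=> lam; rewrite inE => hl ->; exists lam; rewrite hl eqxx.
have cardD : #|line q beta u v :\ 0| = q.-1.
  have := cardsD1 0 (line q beta u v).
  rewrite lineE card_in_imset; last by move=> x y _ _; apply: mulIf.
  rewrite cardFq.
  have -> : (0 : L) \in (fun lam => lam * z) @: Fq.
    by apply/imsetP; exists 0; rewrite ?inE ?expr0n /= ?eqn0Ngt ?hq ?mul0r.
  by move=> ->.
pose R := fun x y : L => [exists i : 'I_d, y == x * g ^+ i].
have hR : forall x y t, R t t * (R x y -> R x t = R y t).
  move=> x y t; split.
    by apply/existsP; exists (Ordinal hd0); rewrite /= expr0 mulr1.
  case/existsP => i /eqP ->; apply/idP/idP.
    case/existsP => j /eqP ->; apply/existsP.
    exists (Ordinal (ltn_pmod (j + d - i) hd0)).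
    rewrite /= expr_mod // -mulrA -exprD subnKC; last first.
      by apply: leq_trans (ltnW (ltn_ord i)) (leq_addl _ _).
    by rewrite exprD hgd mulr1.
  case/existsP => j /eqP ->; apply/existsP.
  exists (Ordinal (ltn_pmod (i + j) hd0)).
  by rewrite /= expr_mod // exprD mulrA.
set D := line q beta u v :\ 0.
have hP : partition (equivalence_partition R D) D.
  by apply: equivalence_partitionP => x y t _ _ _; exact: hR.
have hcyc : forall S, S \in equivalence_partition R D -> is_cycle_len (fmap q c) d S.
  move=> S /imsetP [x0 hx0 ->].
  move: hx0; rewrite /D lineE !inE => /andP [x00 /imsetP [lam]].
  rewrite inE => /eqP hl hx.
  have l0 : lam != 0 by apply: contraNneq x00 => l0; rewrite hx l0 mul0r.
  exists x0; split => //.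
  - by rewrite hx iterf // hgd mulr1.
  - rewrite map_inj_in_uniq ?iota_uniq // => i j; rewrite !mem_iota !add0n => /andP[_ hi] /andP[_ hj].
    rewrite hx !iterf // => e; apply: (@gpow_inj _ g d i j g0 hord hi hj).
    by apply: (mulfI l0); exact: (mulIf hz e).
  - apply/setP => y; rewrite !inE; apply/idP/idP.
      case/andP => /andP [_ _] /existsP [i /eqP ->].
      apply/mapP; exists (val i); first by rewrite mem_iota add0n /=.
      by rewrite hx iterf // mulrAC.
    case/mapP => i; rewrite mem_iota add0n => /andP [_ hi] ->.
    rewrite hx iterf //; apply/andP; split; [apply/andP; split|].
    + by rewrite !mulf_neq0 // expf_neq0.
    + apply/imsetP; exists (lam * g ^+ i) => //.
      by rewrite inE exprMn hl exprAC gq.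
    + by apply/existsP; exists (Ordinal hi); rewrite /= mulrAC.
exists (equivalence_partition R D); split => //.
- have hcd : #|D| = (#|equivalence_partition R D| * d)%N.
    by apply: card_uniform_partition hP => S /hcyc /card_cycle.
  by rewrite -subn1 in cardD; rewrite -cardD hcd mulnK.
- by case/and3P: hP => /eqP.
Qed.
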